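(* Let $n\ge 1$ be an integer and let $\mathbb{F}_q$ be a finite field with $q$ elements. Let $B\subset\mathbb{F}_q^n$ be a Nikodym set, i.e. for every $x\in\mathbb{F}_q^n\setminus B$ there exists a line $L\subset\mathbb{F}_q^n$ such that $L\cap(\mathbb{F}_q^n\setminus B)=\{x\}$. Then \[|B|\ge \binom{n+q-2}{n}.\]
   Context: A line in $\mathbb{F}_q^n$ is a set of the form $\{a+tb: t\in\mathbb{F}_q\}$ with $a,b\in\mathbb{F}_q^n$, $b\neq 0$. *)

(* Defs.v *)
From HB Require Import structures.
From mathcomp Require Import all_boot all_order all_algebra all_field.
Set Implicit Arguments. Unset Strict Implicit. Unset Printing Implicit Defensive.
Import GRing.Theory.
Local Open Scope ring_scope.

(* The line {a + t b : t in F} (meaningful as a line when b != 0). *)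
Definition line (F : finFieldType) (n : nat) (a b : 'rV[F]_n) : {set 'rV[F]_n} :=
  [set a + t *: b | t : F].

Definition nikodym (F : finFieldType) (n : nat) (B : {set 'rV[F]_n}) : Prop :=
  forall x : 'rV[F]_n, x \notin B ->
    exists a b : 'rV[F]_n, b != 0 /\ line a b :&: ~: B = [set x].

(* Main.v *)
From mathcomp Require Import all_boot all_order all_algebra all_field all_fingroup all_solvable.
From mathcomp Require Import zify.
Require Import Defs.
Set Implicit Arguments. Unset Strict Implicit. Unset Printing Implicit Defensive.
Import GRing.Theory FinRing.Theory.
Local Open Scope ring_scope.

Section PS.
Variables (F : finFieldType) (d : nat).
Hypothesis hq : #|F| = d.+2.

Lemma charq : (#|F|%:R : F) = 0.
Proof. by rewrite -cardsT -zmodXgE expg_cardG // inE. Qed.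

Lemma unit1 (t : F) : t != 0 -> t ^+ d.+1 = 1.
Proof.
move=> tnz; apply: (mulfI tnz); rewrite mulr1 -exprS -hq; exact: expf_card.
Qed.

Lemma powsum e : (0 < e)%N ->
  \sum_(t : F) t ^+ e = if (d.+1 %| e)%N then -1 else 0.
Proof.
move=> e0.
have pw (t : F) : t != 0 -> t ^+ e = t ^+ (e %% d.+1).
  by move=> tnz; rewrite {1}(divn_eq e d.+1) exprD mulnC exprM unit1 // expr1n mul1r.
have [hd|hd] := boolP (d.+1 %| e)%N.
  have h1 : \sum_(t : F) (1 : F) = 0.
    by rewrite sumr_const; exact: charq.
  rewrite (bigD1 0) //= expr0n (negbTE (lt0n_neq0 e0)) add0r.
  rewrite (eq_bigr (fun _ => 1)); last first.
    move=> t tnz; rewrite pw //; move: hd; rewrite /dvdn => /eqP ->; exact: expr0.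
  by move/eqP: h1; rewrite (bigD1 0) //= addrC addr_eq0 => /eqP.
have r0 : (0 < e %% d.+1)%N by move: hd; rewrite /dvdn lt0n.
have rlt : (e %% d.+1 < d.+1)%N by rewrite ltn_pmod.
set r := (e %% d.+1)%N in pw r0 rlt.
have -> : \sum_(t : F) t ^+ e = \sum_(t : F) t ^+ r.
  apply: eq_bigr => t _; have [->|tnz] := eqVneq t 0; last exact: pw.
  by rewrite !expr0n (negbTE (lt0n_neq0 e0)) (negbTE (lt0n_neq0 r0)).
have : ~~ [forall c : F, (c != 0) ==> (c ^+ r == 1)].
  apply/negP => /forallP H.
  have pnz : ('X^r - 1 : {poly F}) != 0.
    by rewrite -size_poly_eq0 size_Xn_sub_1.
  have := max_poly_roots pnz (rs := enum (predC1 (0 : F))).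
  rewrite enum_uniq size_Xn_sub_1 // -cardE cardC1 hq /= ltnS leqNgt rlt.
  move=> H2; suff Hall : all (root ('X^r - 1)) (enum (predC1 (0:F))) by have := H2 Hall isT.
  apply/allP => c; rewrite mem_enum /= => cnz.
  have cnz2 : c != 0 := cnz. have := H c; rewrite cnz2 /= => /eqP hc.
  by rewrite rootE !hornerE hc subrr.
rewrite negb_forall => /existsP [c]; rewrite negb_imply => /andP [cnz hc].
set S := \sum_(t : F) t ^+ r.
have : S = c ^+ r * S.
  rewrite {1}/S (reindex_inj (mulfI cnz)) /S mulr_sumr; apply: eq_bigr => t _.
  by rewrite exprMn.
move/eqP; rewrite -subr_eq0 -{1}(mul1r S) -mulrBl mulf_eq0 subr_eq0 eq_sym (negbTE hc) /=.
by move/eqP.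
Qed.

Lemma key_dvd (a b : nat) : (a < d.+1)%N -> (b < d.+1)%N ->
  (d.+1 %| a + (d.+1 - b))%N = (a == b).
Proof.
move=> ha hb; case: (ltngtP a b) => hab.
- have h : ~~ (d.+1 <= a + (d.+1 - b))%N by lia.
  by apply: (contraNF _ h) => /dvdn_leq; apply; lia.
- have -> : (a + (d.+1 - b) = d.+1 + (a - b))%N by lia.
  rewrite dvdn_addr //.
  have h : ~~ (d.+1 <= a - b)%N by lia.
  by apply: (contraNF _ h) => /dvdn_leq; apply; lia.
- by rewrite hab subnKC ?dvdnn ?eqxx //; apply: ltnW.
Qed.

Variable n : nat.

Definition mono (t : n.-tuple 'I_d.+1) (x : 'rV[F]_n) : F :=
  \prod_(i < n) x 0 i ^+ tnth t i.

Lemma sumprod (g : 'I_n -> F -> F) :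
  \sum_(x : 'rV[F]_n) \prod_(i < n) g i (x 0 i) = \prod_(i < n) \sum_(t : F) g i t.
Proof.
rewrite bigA_distr_bigA (reindex (fun f : {ffun 'I_n -> F} => \row_i f i)) /=.
  by apply: eq_bigr => f _; apply: eq_bigr => i _; rewrite mxE.
exists (fun x : 'rV[F]_n => [ffun i => x 0 i]) => [f _|x _].
  by apply/ffunP => i; rewrite ffunE mxE.
by apply/rowP => i; rewrite mxE ffunE.
Qed.

Lemma extract (I : finType) (T : I -> n.-tuple 'I_d.+1) (c : I -> F) :
  injective T -> (forall x, \sum_j c j * mono (T j) x = 0) -> forall j0, c j0 = 0.
Proof.
move=> injT H j0.
pose g (x : 'rV[F]_n) := \prod_(i < n) x 0 i ^+ (d.+1 - tnth (T j0) i).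
have E2 j : \sum_(x : 'rV[F]_n) mono (T j) x * g x = if j == j0 then (-1) ^+ n else 0.
  rewrite (eq_bigr (fun x : 'rV[F]_n => \prod_(i < n)
       (fun i t => t ^+ (tnth (T j) i + (d.+1 - tnth (T j0) i))%N) i (x 0 i))); last first.
    by move=> x _; rewrite /mono /g -big_split /=; apply: eq_bigr => i _; rewrite exprD.
  rewrite (sumprod (fun i (t : F) => t ^+ (tnth (T j) i + (d.+1 - tnth (T j0) i))%N)).
  rewrite (eq_bigr (fun i => if tnth (T j) i == tnth (T j0) i then -1 else 0)); last first.
    move=> i _ /=; rewrite powsum; last by have := ltn_ord (tnth (T j0) i); lia.
    by rewrite key_dvd.
  have [->|hj] := eqVneq j j0.
    by rewrite (eq_bigr (fun _ => -1)) ?prodr_const ?card_ord // => i _; rewrite eqxx.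
  have : ~~ [forall i, tnth (T j) i == tnth (T j0) i].
    apply/negP => /forallP Hf; move/eqP: hj; apply; apply: injT.
    by apply: eq_from_tnth => i; apply/eqP.
  rewrite negb_forall => /existsP [i hi].
  by rewrite (bigD1 i) //= (negbTE hi) mul0r.
have : \sum_(x : 'rV[F]_n) (\sum_j c j * mono (T j) x) * g x = 0.
  by rewrite big1 // => x _; rewrite H mul0r.
under eq_bigr do rewrite mulr_suml.
rewrite exchange_big /=.
under eq_bigr do rewrite -(eq_bigr _ (fun x _ => mulrA _ _ _)) -mulr_sumr E2.
rewrite (bigD1 j0) //= eqxx big1 ?addr0; last by move=> j /negbTE ->; rewrite mulr0.
by move/eqP; rewrite mulf_eq0 signr_eq0 orbF => /eqP.
Qed.

Lemma linepoly (I : finType) (T : I -> n.-tuple 'I_d.+1) (c : I -> F) (a b : 'rV[F]_n) :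
  (forall j, \sum_(i < n) (tnth (T j) i : nat) <= d)%N ->
  exists p : {poly F}, (size p <= d.+1)%N /\
     forall t, p.[t] = \sum_j c j * mono (T j) (a + t *: b).
Proof.
move=> hT.
pose lin i : {poly F} := (a 0 i)%:P + (b 0 i)%:P * 'X.
have hlin i : (size (lin i) <= 2)%N.
  apply: leq_trans (size_polyD _ _) _; rewrite geq_max.
  rewrite (leq_trans (size_polyC_leq1 _)) //.
  apply: leq_trans (size_polyMleq _ _) _; rewrite size_polyX.
  by have := size_polyC_leq1 (b 0 i); lia.
exists (\sum_j c j *: \prod_(i < n) lin i ^+ tnth (T j) i); split.
  apply: (big_ind (fun p : {poly F} => size p <= d.+1)%N) => //.
  - by rewrite size_poly0.
  - by move=> p q hp hq2; apply: leq_trans (size_polyD _ _) _; rewrite geq_max hp hq2.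
  move=> j _; apply: leq_trans (size_scale_leq _ _) _.
  apply: leq_trans (_ : (\sum_(i < n) (tnth (T j) i : nat)).+1 <= d.+1)%N; last exact: hT j.
  elim/big_rec2: _ => [|i s p _ hp]; first by rewrite size_poly1.
  apply: leq_trans (size_polyMleq _ _) _.
  have := size_poly_exp_leq (lin i) (tnth (T j) i); have := hlin i.
  move: (size (lin i ^+ _)) (size (lin i)) => u v; nia.
move=> t; rewrite horner_sum; apply: eq_bigr => j _.
rewrite hornerZ horner_prod; congr (_ * _); apply: eq_bigr => i _.
by rewrite horner_exp /lin !hornerE !mxE mulrC.
Qed.
End PS.

Lemma kernel_vec (F : fieldType) m k (A : 'M[F]_(m,k)) :
  (k < m)%N -> exists u : 'rV[F]_m, u != 0 /\ u *m A = 0.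
Proof.
move=> hkm.
have hK : kermx A != 0.
  rewrite -mxrank_eq0 mxrank_ker subn_eq0 -ltnNge.
  exact: leq_ltn_trans (rank_leq_col A) hkm.
have [i hi] : exists i, row i (kermx A) != 0.
  case: (boolP [exists i, row i (kermx A) != 0]) => [/existsP //|].
  rewrite negb_exists => /forallP H; move: hK; rewrite -[_ != 0]/(~~ _).
  move/negP; case; apply/eqP/matrixP => i j.
  by have := H i; rewrite negbK => /eqP /rowP /(_ j); rewrite !mxE.
by exists (row i (kermx A)); split => //; rewrite -row_mul mulmx_ker row0.
Qed.


Theorem mainTheorem1 (F : finFieldType) (n : nat) (hn : (1 <= n)%N)
  (B : {set 'rV[F]_n}) (hB : nikodym B) :
  ('C(n + #|F| - 2, n) <= #|B|)%N.
Proof.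
have hq1 := finNzRing_gt1 F.
pose d := (#|F| - 2)%N.
have hq : #|F| = d.+2 by move: hq1; rewrite /d; move: #|F| => k hk; lia.
have -> : (n + #|F| - 2 = n + d)%N by rewrite hq; lia.
rewrite -(card_partial_ord_partitions n d).
set M := [set _ | _].
rewrite leqNgt; apply/negP => hlt.
pose A := \matrix_(i < #|M|, j < #|B|) mono (enum_val i) (enum_val j).
have [u [unz hu]] := kernel_vec A hlt.
pose f x := \sum_i u 0 i * mono (enum_val i) x.
have hB0 : forall x, x \in B -> f x = 0.
  move=> x xB; have := congr1 (fun v : 'rV[F]_#|B| => v 0 (enum_rank_in xB x)) hu.
  rewrite !mxE => <-; rewrite /f; apply: eq_bigr => i _.
  by rewrite mxE enum_rankK_in.
have hsum : forall i : 'I_#|M|, (\sum_(k < n) (tnth (enum_val i) k : nat) <= d)%N.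
  by move=> i; have := enum_valP i; rewrite inE big_tuple.
have hall : forall x, f x = 0.
  move=> x; case: (boolP (x \in B)) => [|xnB]; first exact: hB0.
  have [a [b [bnz hL]]] := hB x xnB.
  have : x \in line a b :&: ~: B by rewrite hL set11.
  rewrite inE => /andP [/imsetP [t0 _ hx] _].
  have [p [hp hpe]] := linepoly hq (fun i => u 0 i) a b hsum.
  have p0 : p = 0.
    apply: (roots_geq_poly_eq0 (rs := enum (predC1 t0))).
    - apply/allP => t; rewrite mem_enum => tnt0.
      rewrite /root hpe; apply/eqP; apply: hB0.
      apply/negPn/negP => hy.
      have : a + t *: b \in line a b :&: ~: B.
        by rewrite inE in_setC hy andbT; apply/imsetP; exists t.
      rewrite hL inE hx => /eqP /addrI /eqP.
      rewrite -subr_eq0 -scalerBl scaler_eq0 subr_eq0 (negbTE bnz) orbF.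
      by move/eqP => ht; move: tnt0; rewrite ht; rewrite !inE eqxx.
    - exact: enum_uniq.
    - by rewrite -cardE cardC1 hq.
  move: (hpe t0); rewrite p0 horner0 -hx => H; by rewrite /f -H.
have H := extract hq (T := enum_val) (c := fun i => u 0 i) enum_val_inj hall.
move: unz; apply/negP; rewrite negbK; apply/eqP/rowP => i; rewrite mxE; exact: H i.
Qed.
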